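(* The center of the group $QI(\mathbb{R})$ of quasi-isometries of the real line is trivial.
   Context: A map $f:\mathbb{R}\to\mathbb{R}$ is a quasi-isometry if there is $K>1$ such that $\frac{1}{K}|x_1-x_2|-K\le |f(x_1)-f(x_2)|\le K|x_1-x_2|+K$ for all $x_1,x_2\in\mathbb{R}$, and every $y\in\mathbb{R}$ is within distance $K$ of some $f(x)$. Two quasi-isometries $f,g$ are equivalent if $\sup_{x\in\mathbb{R}}|f(x)-g(x)|<\infty$. $QI(\mathbb{R})$ is the set of equivalence classes $[f]$ of quasi-isometries $\mathbb{R}\to\mathbb{R}$, a group under $[f]\cdot[g]=[f\circ g]$. *)

(* Defs.v *)
From Stdlib Require Import Reals.
Open Scope R_scope.

Definition quasi_isometry (f : R -> R) : Prop :=
  exists K : R, 1 < K /\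
    (forall x1 x2 : R,
        / K * Rabs (x1 - x2) - K <= Rabs (f x1 - f x2) /\
        Rabs (f x1 - f x2) <= K * Rabs (x1 - x2) + K) /\
    (forall y : R, exists x : R, Rabs (y - f x) <= K).

Definition qi_equiv (f g : R -> R) : Prop :=
  exists B : R, forall x : R, Rabs (f x - g x) <= B.

Definition qi_central (f : R -> R) : Prop :=
  forall g : R -> R, quasi_isometry g ->
    qi_equiv (fun x => f (g x)) (fun x => g (f x)).

(* Main.v *)
Require Import Defs.
From Stdlib Require Import Reals Lra Psatz Lia Arith Classical ClassicalEpsilon.
From Coquelicot Require Import Coquelicot.
Open Scope R_scope.

Section D.
Variable y : nat -> R.

Definition dd (x : R) : R := real (Inf_seq (fun n => Finite (Rabs (x - y n)))).

Lemma dd_spec x : (forall n, dd x <= Rabs (x - y n)) /\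
  (forall eps, 0 < eps -> exists n, Rabs (x - y n) < dd x + eps).
Proof.
  unfold dd.
  pose proof (Inf_seq_correct (fun n => Finite (Rabs (x - y n)))) as H.
  destruct (Inf_seq _) as [l| |]; simpl in *.
  - split.
    + intros n. destruct (Rle_or_lt l (Rabs (x - y n))) as [h|h]; auto.
      destruct (H (mkposreal (l - Rabs (x - y n)) ltac:(lra))) as [H1 _].
      specialize (H1 n). simpl in H1. lra.
    + intros eps He. destruct (H (mkposreal eps He)) as [_ [n Hn]].
      exists n. simpl in Hn. exact Hn.
  - specialize (H (Rabs (x - y 0%nat)) 0%nat). simpl in H. lra.
  - destruct (H 0) as [n Hn]. simpl in Hn. pose proof (Rabs_pos (x - y n)). lra.
Qed.

Lemma dd_ge0 x : 0 <= dd x.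
Proof.
  destruct (Rle_or_lt 0 (dd x)) as [h|h]; auto.
  destruct (dd_spec x) as [_ H]. destruct (H (- dd x)) as [n Hn]; [lra|].
  pose proof (Rabs_pos (x - y n)). lra.
Qed.

Lemma dd_lip x x' : Rabs (dd x - dd x') <= Rabs (x - x').
Proof.
  assert (G : forall a b, dd a <= dd b + Rabs (a - b)).
  { intros a b. destruct (Rle_or_lt (dd a) (dd b + Rabs (a - b))) as [h|h]; auto.
    destruct (dd_spec b) as [_ H]. destruct (dd_spec a) as [Ha _].
    destruct (H (dd a - dd b - Rabs (a - b))) as [n Hn]; [lra|].
    specialize (Ha n).
    assert (Rabs (a - y n) <= Rabs (a - b) + Rabs (b - y n)).
    { replace (a - y n) with ((a - b) + (b - y n)) by ring. apply Rabs_triang. }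
    lra. }
  pose proof (G x x'). pose proof (G x' x).
  rewrite (Rabs_minus_sym x' x) in H0.
  apply Rabs_le. lra.
Qed.

Lemma dd_zero n : dd (y n) = 0.
Proof.
  destruct (dd_spec (y n)) as [H _]. specialize (H n).
  rewrite Rminus_diag, Rabs_R0 in H. pose proof (dd_ge0 (y n)). lra.
Qed.

Definition gg (x : R) : R := x + dd x / 2.

Lemma gg_cont : continuity gg.
Proof.
  intros x. unfold continuity_pt, continue_in, limit1_in, limit_in.
  intros eps He. exists (eps / 2). split; [lra|].
  intros z [_ Hz]. simpl in *. unfold R_dist in *. unfold gg.
  pose proof (dd_lip z x).
  replace (z + dd z / 2 - (x + dd x / 2)) with ((z - x) + (dd z - dd x) / 2) by field.
  eapply Rle_lt_trans; [apply Rabs_triang|].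
  unfold Rdiv. rewrite Rabs_mult, (Rabs_right (/2)) by lra. lra.
Qed.

Lemma gg_qi : quasi_isometry gg.
Proof.
  exists 2. split; [lra|]. split.
  - intros x1 x2. unfold gg. pose proof (dd_lip x1 x2).
    replace (x1 + dd x1 / 2 - (x2 + dd x2 / 2)) with ((x1 - x2) + (dd x1 - dd x2) / 2) by field.
    set (a := x1 - x2) in *. set (b := dd x1 - dd x2) in *.
    pose proof (Rabs_pos a).
    split.
    + destruct (Rcase_abs a); destruct (Rcase_abs b); destruct (Rcase_abs (a + b/2));
      repeat first [rewrite Rabs_left in * by lra | rewrite Rabs_right in * by lra]; lra.
    + destruct (Rcase_abs a); destruct (Rcase_abs b); destruct (Rcase_abs (a + b/2));
      repeat first [rewrite Rabs_left in * by lra | rewrite Rabs_right in * by lra]; lra.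
  - intros z.
    set (a := Rmin (y 0%nat) (2 * z - y 0%nat) - 1).
    assert (Ha : gg a - z < 0).
    { unfold gg. destruct (dd_spec a) as [H _]. specialize (H 0%nat).
      assert (a < y 0%nat) by (unfold a; pose proof (Rmin_l (y 0%nat) (2 * z - y 0%nat)); lra).
      assert (a < 2 * z - y 0%nat) by (unfold a; pose proof (Rmin_r (y 0%nat) (2 * z - y 0%nat)); lra).
      rewrite Rabs_left in H by lra. lra. }
    assert (Hb : 0 < gg (z + 1) - z).
    { unfold gg. pose proof (dd_ge0 (z + 1)). lra. }
    assert (Hab : a < z + 1).
    { unfold a. pose proof (Rmin_l (y 0%nat) (2 * z - y 0%nat)).
      pose proof (Rmin_r (y 0%nat) (2 * z - y 0%nat)). lra. }
    destruct (IVT (fun x => gg x - z) a (z + 1)) as [x [_ Hx]]; auto.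
    { apply continuity_minus; [apply gg_cont | apply continuity_const; intros ? ?; reflexivity]. }
    exists x. simpl in Hx. replace (z - gg x) with 0 by lra. rewrite Rabs_R0. lra.
Qed.

End D.

Fixpoint yseq (p : R -> R) (K C : R) (n : nat) : R :=
  match n with
  | O => p 0
  | S m => p ((K + 1) * (K * (Rabs (yseq p K C m) + C + INR (S m))) + C + INR (S m))
  end.

Theorem theorem1 : forall f : R -> R,
  quasi_isometry f -> qi_central f -> qi_equiv f (fun x => x).
Proof.
  intros f Hf Hc.
  destruct (classic (qi_equiv f (fun x => x))) as [h|Hn]; auto. exfalso.
  assert (Hub : forall N, exists x, N < Rabs (f x - x)).
  { intros N. apply NNPP. intro H. apply Hn. exists N. intros x.
    apply Rnot_lt_le. intro h. apply H. exists x. exact h. }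
  destruct Hf as [K [HK [Hb _]]].
  set (C := K + Rabs (f 0)).
  assert (HC : 0 <= C) by (unfold C; pose proof (Rabs_pos (f 0)); lra).
  assert (Fup : forall z, Rabs (f z) <= K * Rabs z + C).
  { intros z. destruct (Hb z 0) as [_ H]. rewrite Rminus_0_r in H.
    pose proof (Rabs_triang_inv (f z) (f 0)). unfold C. lra. }
  assert (Flo : forall z, / K * Rabs z - C <= Rabs (f z)).
  { intros z. destruct (Hb z 0) as [H _]. rewrite Rminus_0_r in H.
    pose proof (Rabs_triang (f z) (- f 0)). rewrite Rabs_Ropp in H0.
    unfold C. unfold Rminus in H. pose proof (Rabs_pos (f 0)). lra. }
  set (pick := fun N => proj1_sig (constructive_indefinite_description _ (Hub N))).
  assert (Hpick : forall N, N < Rabs (f (pick N) - pick N)).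
  { intro N. unfold pick. destruct (constructive_indefinite_description _ (Hub N)); assumption. }
  set (y := yseq pick K C).
  assert (Hpos : forall n, 0 <= INR n) by apply pos_INR.
  assert (HA : forall j, INR j < Rabs (f (y j) - y j)).
  { intros [|m].
    - simpl. specialize (Hpick 0). exact Hpick.
    - change (y (S m)) with (pick ((K + 1) * (K * (Rabs (y m) + C + INR (S m))) + C + INR (S m))).
      set (N := (K + 1) * (K * (Rabs (y m) + C + INR (S m))) + C + INR (S m)).
      specialize (Hpick N).
      assert (0 <= (K + 1) * (K * (Rabs (y m) + C + INR (S m)))).
      { pose proof (Rabs_pos (y m)). pose proof (Hpos (S m)).
        apply Rmult_le_pos; [lra|]. apply Rmult_le_pos; lra. }
      assert (INR (S m) <= N) by (unfold N; lra). clearbody N. lra. }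
  assert (HB : forall m, K * (Rabs (y m) + C + INR (S m)) < Rabs (y (S m))).
  { intros m.
    change (y (S m)) with (pick ((K + 1) * (K * (Rabs (y m) + C + INR (S m))) + C + INR (S m))).
    set (X := K * (Rabs (y m) + C + INR (S m))).
    set (Y := pick ((K + 1) * X + C + INR (S m))).
    pose proof (Hpick ((K + 1) * X + C + INR (S m))) as H. fold Y in H.
    pose proof (Fup Y).
    pose proof (Rabs_triang (f Y) (- Y)). rewrite Rabs_Ropp in H1.
    unfold Rminus in H.
    destruct (Rlt_or_le X (Rabs Y)) as [h|h]; auto.
    assert (0 <= (K + 1) * (X - Rabs Y)) by (apply Rmult_le_pos; lra).
    pose proof (Hpos (S m)). nra. }
  assert (Hmono1 : forall m, Rabs (y m) <= Rabs (y (S m))).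
  { intros m. specialize (HB m). pose proof (Hpos (S m)). pose proof (Rabs_pos (y m)). nra. }
  assert (Hmono : forall i j, (i <= j)%nat -> Rabs (y i) <= Rabs (y j)).
  { intros i j Hij. induction Hij; [lra|]. eapply Rle_trans; [exact IHHij|apply Hmono1]. }
  destruct (Hc (gg y) (gg_qi y)) as [B HBd].
  assert (HB0 : 0 <= B) by (specialize (HBd 0); pose proof (Rabs_pos (f (gg y 0) - gg y (f 0))); lra).
  destruct (INR_unbounded (2 * B + 1)) as [j Hj].
  specialize (HBd (y j)). simpl in HBd.
  unfold gg in HBd at 1. unfold y in HBd. rewrite dd_zero in HBd. fold y in HBd.
  replace (y j + 0 / 2) with (y j) in HBd by field.
  unfold gg in HBd.
  replace (f (y j) - (f (y j) + dd y (f (y j)) / 2)) with (- (dd y (f (y j)) / 2)) in HBd by ring.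
  rewrite Rabs_Ropp in HBd. pose proof (dd_ge0 y (f (y j))).
  rewrite Rabs_right in HBd by lra.
  destruct (dd_spec y (f (y j))) as [_ Hap].
  destruct (Hap 1 ltac:(lra)) as [i Hi].
  assert (Hij : Rabs (f (y j) - y i) < INR j) by lra.
  destruct (lt_eq_lt_dec i j) as [[lt|eq]|gt].
  - destruct j as [|j']; [inversion lt|].
    assert (Hi' : Rabs (y i) <= Rabs (y j')) by (apply Hmono; lia).
    specialize (HB j'). specialize (Flo (y (S j'))).
    assert (HKi : 0 < / K) by (apply Rinv_0_lt_compat; lra).
    assert (/ K * (K * (Rabs (y j') + C + INR (S j'))) < / K * Rabs (y (S j')))
      by (apply Rmult_lt_compat_l; auto).
    rewrite <- Rmult_assoc, Rinv_l, Rmult_1_l in H0 by lra.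
    pose proof (Rabs_triang_inv (f (y (S j'))) (y i)). lra.
  - subst. specialize (HA j). lra.
  - assert (Hi' : Rabs (y (S j)) <= Rabs (y i)) by (apply Hmono; lia).
    specialize (HB j). specialize (Fup (y j)).
    pose proof (Rabs_triang_inv (y i) (f (y j))). rewrite Rabs_minus_sym in H0.
    rewrite S_INR in HB. pose proof (Hpos j). pose proof (Rabs_pos (y j)).
    assert (K * C >= C) by nra. assert (K * INR j >= INR j) by nra. nra.
Qed.
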